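(* Let $\Sigma$ be an alphabet with $|\Sigma|=3$. There exists an infinite word over $\Sigma$ that is pseudo-square-free with respect to the mirror image $\operatorname{Mir}$, and for every antimorphic involution $\theta\neq\operatorname{Mir}$ on $\Sigma^*$ there is no infinite word over $\Sigma$ that is pseudo-square-free with respect to $\theta$.
   Context: A function $\theta:\Sigma^*\to\Sigma^*$ is an antimorphic involution if $\theta(uv)=\theta(v)\theta(u)$ and $\theta(\theta(w))=w$ for all words $u,v,w$. The mirror image is $\operatorname{Mir}(b_1\cdots b_n)=b_n\cdots b_1$. A pseudo square with respect to $\theta$ is a nonempty word $u_1u_2$ with $u_1=u_2$ or $u_1=\theta(u_2)$. A word is pseudo-square-free with respect to $\theta$ if no factor (contiguous subword) of it is a pseudo square with respect to $\theta$. *)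

(* Defs.v *)
From mathcomp Require Import all_boot.
Set Implicit Arguments. Unset Strict Implicit. Unset Printing Implicit Defensive.

Definition antimorphic_involution (S : Type) (theta : seq S -> seq S) : Prop :=
  (forall u v, theta (u ++ v) = theta v ++ theta u) /\
  (forall w, theta (theta w) = w).

Definition Mir (S : Type) (w : seq S) : seq S := rev w.

Definition pseudo_square (S : Type) (theta : seq S -> seq S) (w : seq S) : Prop :=
  w <> [::] /\ exists u1 u2, w = u1 ++ u2 /\ (u1 = u2 \/ u1 = theta u2).

Definition factor (S : Type) (x : nat -> S) (i n : nat) : seq S :=
  mkseq (fun k => x (i + k)) n.

Definition pseudo_square_free_inf (S : Type) (theta : seq S -> seq S)
  (x : nat -> S) : Prop :=
  forall i n, ~ pseudo_square theta (factor x i n).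

(* Main.v *)
Require Import Defs.
From mathcomp Require Import all_boot zify.

Fixpoint tmf (f n : nat) : bool :=
  match f with 0 => false | f'.+1 => if n is 0 then false else odd n (+) tmf f' n./2 end.

Lemma tmf_stable f : forall f' n, n <= f -> n <= f' -> tmf f n = tmf f' n.
Proof.
elim: f => [|f IH] [|f'] [|n] //= H1 H2.
congr (_ (+) _); apply: IH.
- have := ltn_half_double n.+1 n.+1. rewrite -addnn. lia.
- have := ltn_half_double n.+1 n.+1. rewrite -addnn. lia.
Qed.

Definition tm n := tmf n n.

Lemma tm_half n : tm n = odd n (+) tm n./2.
Proof.
rewrite /tm; case: n => [|n] //=.
congr (_ (+) _); apply: tmf_stable => //.
have := ltn_half_double n.+1 n.+1. rewrite -addnn. lia.
Qed.

Lemma tm_alt n : ~~ odd n -> tm n.+1 = ~~ tm n.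
Proof.
move=> Hn; rewrite (tm_half n.+1) (tm_half n) /= uphalf_half.
rewrite (negbTE Hn) /=; by case: (tm _).
Qed.

Lemma tm_even h : tm h.*2 = tm h.
Proof. by rewrite tm_half odd_double doubleK. Qed.

Lemma tm_no3 j : tm j = tm j.+1 -> tm j.+1 = tm j.+2 -> False.
Proof.
case Ho: (odd j) => H1 H2.
- have := tm_alt (j.+1); rewrite /= Ho /= => /(_ isT); rewrite H2.
  by case: (tm j.+2).
- have := tm_alt j; rewrite Ho => /(_ isT); rewrite H1. by case: (tm j.+1).
Qed.

Definition overlap i p := forall k, k <= p -> tm (i + k) = tm (i + k + p).

Lemma tm_overlap_free p : 0 < p -> forall i, ~ overlap i p.
Proof.
elim/ltn_ind: p => p IH Hp i Hov.
case Hpo: (odd p).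
-
  have Halt : forall k, k < p -> tm (i + k).+1 = ~~ tm (i + k).
    move=> k Hk; case Hik: (odd (i + k)).
    + have E1 := Hov k (ltnW Hk). have E2 := Hov k.+1 Hk.
      have := tm_alt (i + k + p). rewrite oddD Hik Hpo /= => /(_ isT).
      have -> : (i + k + p).+1 = i + k.+1 + p by lia.
      by rewrite -E1 -E2 addnS.
    + by apply: tm_alt; rewrite Hik.
  have Halt2 : forall k, k < p.*2 -> tm (i + k).+1 = ~~ tm (i + k).
    move=> k Hk; case: (ltnP k p) => Hkp; first exact: Halt.
    rewrite -muln2 in Hk.
    have E1 := Hov (k - p) ltac:(lia).
    have E2 := Hov (k - p).+1 ltac:(lia).
    have H := Halt (k - p) ltac:(lia).
    have -> : (i + k).+1 = i + (k - p).+1 + p by lia.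
    have -> : i + k = i + (k - p) + p by lia.
    by rewrite -E1 -E2 addnS.
  case: (ltnP p 2) => Hp2.
  + have Hp1 : p = 1 by lia.
    have H1 := Halt 0 Hp; have H2 := Hov 0 (leq0n _).
    rewrite Hp1 !addn0 addn1 in H2; rewrite addn0 -H2 in H1.
    by move: H1; case: (tm i).
  + have Hp3 : 3 <= p by move: Hpo; case: p Hp2 {IH Hp Halt Halt2 Hov} => [|[|[|]]].
    pose n0 := i + odd i.
    have Hn0 : ~~ odd n0 by rewrite /n0 oddD; case: (odd i).
    have A : forall k, k < 4 -> tm (n0 + k).+2 = tm (n0 + k).
      move=> k Hk.
      have H1 := Halt2 (odd i + k). have H2 := Halt2 (odd i + k).+1.
      rewrite -muln2 in H1 H2.
      rewrite /n0 -addnA -addnS H2; last by case: (odd i) {Hn0}; lia.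
      rewrite addnS H1 ?negbK //; by case: (odd i) {Hn0}; lia.
    have En0 : n0 = (n0./2).*2 by rewrite -[in LHS](odd_double_half n0) (negbTE Hn0).
    move: En0; set h := n0./2 => En0.
    have B0 : tm h = tm n0 by rewrite En0 tm_even.
    have B1 : tm h.+1 = tm n0.+2 by rewrite En0 -doubleS tm_even.
    have B2 : tm h.+2 = tm n0.+4 by rewrite En0 -!doubleS tm_even.
    have A0 := A 0 isT; have A2 := A 2 isT; rewrite addn0 in A0.
    rewrite addn2 in A2.
    apply: (tm_no3 h); rewrite ?B0 ?B1 ?B2 //; congruence.
-
  have Ep : p = (p./2).*2 by rewrite -[in LHS](odd_double_half p) Hpo.
  apply: (IH p./2 _ _ i./2).
  + rewrite {2}Ep -addnn; have : 0 < p./2 by rewrite Ep in Hp; case: (p./2) Hp.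
    lia.
  + rewrite Ep in Hp; by case: (p./2) Hp.
  move=> k Hk.
  have := Hov (k.*2); rewrite Ep leq_double => /(_ Hk).
  rewrite (tm_half (i + k.*2)) (tm_half (i + k.*2 + _)).
  rewrite !oddD !odd_double !addbF.
  rewrite -!addnA -doubleD !halfD !odd_double !andbF !add0n !doubleK.
  by move/addbI.
Qed.

Definition code n := (1 + tm n.+1 - tm n)%N.

Lemma code_bool (a b c d : bool): (1 + b - a = 1 + d - c)%N ->
  ((a == c) = (b == d)) /\ (a != c -> b = a).
Proof. by case: a; case: b; case: c; case: d. Qed.

Lemma code_square j p : 0 < p ->
  (forall k, k < p -> code (j+k) = code (j+k+p)) -> False.
Proof.
move=> Hp Hsq.
have key : forall k, k <= p ->
   ((tm (j+k) == tm (j+k+p)) = (tm j == tm (j+p))) /\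
   (tm j != tm (j+p) -> tm (j+k) = tm j).
  elim=> [|k IHk] Hk; first by rewrite addn0.
  have [E1 E2] := IHk (ltnW Hk).
  have [C1 C2] := @code_bool _ _ _ _ (Hsq k Hk).
  have -> : j + k.+1 + p = (j + k + p).+1 by lia.
  rewrite addnS; split; first by rewrite -C1 E1.
  move=> H; have H1 : tm (j + k) != tm (j + k + p) by rewrite E1.
  by rewrite (C2 H1) (E2 H).
have [_ K] := key p (leqnn p).
case E: (tm j == tm (j+p)).
- have := @tm_overlap_free p Hp j; apply; move=> k Hk; apply/eqP.
  by rewrite (key k Hk).1 E.
- have E1 : tm j != tm (j+p) by rewrite E.
  by move: E; rewrite (K E1) eqxx.
Qed.

Lemma code_lt3 n : code n < 3.
Proof. rewrite /code; by case: (tm n); case: (tm n.+1). Qed.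

Lemma mkseq_add (T : Type) (f : nat -> T) m n :
  mkseq f (m + n) = mkseq f m ++ mkseq (fun k => f (m + k)) n.
Proof. by rewrite /mkseq iotaD map_cat add0n -(addn0 m) iotaDl -map_comp addn0. Qed.

Require Import Defs.

Lemma square_of_ps (S : Type) (x : nat -> S) i n :
  pseudo_square (@Mir S) (factor x i n) ->
  exists j p, 0 < p /\ forall k, k < p -> x (j+k) = x (j+k+p).
Proof.
case=> Hne [u1 [u2 [Hw Hu]]].
have Hnth : forall k, k < n -> nth (x 0) (factor x i n) k = x (i+k).
  by move=> k Hk; rewrite /factor nth_mkseq.
have Hsz : size (factor x i n) = n by rewrite size_mkseq.
have Hu2 : 0 < size u2.
  move: Hne Hu; rewrite Hw /Mir; clear Hw Hnth Hsz; case: u2 => [|? ?] //.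
  by move=> Hne Hu; case: Hu => Hu; move: Hne; rewrite Hu => /(_ erefl).
case: Hu => Hu; rewrite Hu in Hw.
- exists i, (size u2); split => // k Hk.
  have Hn : n = size u2 + size u2 by rewrite -Hsz Hw size_cat.
  rewrite -addnA -(Hnth k); last lia.
  rewrite -(Hnth (k + size u2)); last lia.
  by rewrite Hw !nth_cat Hk ltnNge leq_addl /= addnK.
- have Hn : n = size u2 + size u2 by rewrite -Hsz Hw size_cat /Mir size_rev.
  exists (i + (size u2).-1), 1; split => // k Hk.
  have -> : k = 0 by lia.
  rewrite !addn0 addn1 -addnS -(Hnth (size u2).-1); last lia.
  rewrite -(Hnth (size u2).-1.+1); last lia.
  rewrite prednK // Hw /Mir !nth_cat size_rev ltnn subnn.
  have -> : ((size u2).-1 < size u2) by lia.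
  rewrite nth_rev; last lia.
  by rewrite prednK // subnn.
Qed.

Lemma part1 (S : finType) (hS : #|S| = 3) :
  exists x : nat -> S, pseudo_square_free_inf (@Mir S) x.
Proof.
have : 0 < #|S| by rewrite hS.
case/card_gt0P => x0 _.
exists (fun n => nth x0 (enum S) (code n)).
move=> i n /square_of_ps [j [p [Hp Hsq]]].
apply: (@code_square j p Hp) => k Hk.
have := Hsq k Hk; move/eqP.
rewrite nth_uniq ?enum_uniq // -?cardE ?hS ?code_lt3 //.
by move/eqP.
Qed.

Section Theta.
Variable S : finType.
Variable theta : seq S -> seq S.
Hypothesis Hth : antimorphic_involution theta.

Lemma th_nil : theta [::] = [::].
Proof.
have := (Hth.1 [::] [::]) => /(congr1 size); rewrite cat0s size_cat.
by move=> H; apply/size0nil; lia.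
Qed.

Lemma th_cons s w : theta (s :: w) = theta w ++ theta [:: s].
Proof. by rewrite -cat1s Hth.1. Qed.

Lemma th_letter_ne s : theta [:: s] <> [::].
Proof. by move=> H; have := Hth.2 [:: s]; rewrite H th_nil. Qed.

Lemma th_size_ge w : size w <= size (theta w).
Proof.
elim: w => [|s w IH] //=; rewrite th_cons size_cat.
have : 0 < size (theta [:: s]) by case E: (theta [:: s]) => //; have := th_letter_ne s.
lia.
Qed.

Lemma th_letter_size s : size (theta [:: s]) = 1.
Proof.
have := Hth.2 [:: s]; have := th_letter_ne s.
case: (theta [:: s]) => [|y t] // _ H.
have := congr1 size H; rewrite th_cons size_cat /=.
have := th_size_ge t; have : 0 < size (theta [:: y]).
  by case E: (theta [:: y]) => //; have := th_letter_ne y.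
lia.
Qed.

Definition gl s := head s (theta [:: s]).

Lemma th_letter s : theta [:: s] = [:: gl s].
Proof.
rewrite /gl; have := th_letter_size s.
by case: (theta [:: s]) => [|y [|]].
Qed.

Lemma th_rev w : theta w = rev (map gl w).
Proof.
elim: w => [|s w IH]; first by rewrite th_nil.
by rewrite th_cons IH th_letter /= rev_cons cats1.
Qed.

Lemma gl_inv s : gl (gl s) = s.
Proof. by have := Hth.2 [:: s]; rewrite !th_letter; case. Qed.

End Theta.

From Stdlib Require Import FunctionalExtensionality.

Lemma part2 (S : finType) (hS : #|S| = 3) (theta : seq S -> seq S) :
  antimorphic_involution theta -> theta <> @Mir S ->
  ~ exists x : nat -> S, pseudo_square_free_inf theta x.
Proof.
move=> Hth Hne [x Hfree].
pose g := gl S theta.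
have gI : forall s, g (g s) = s by move=> s; exact: (@gl_inv S theta Hth).
have thE : forall w, theta w = rev (map g w) by move=> w; exact: (@th_rev S theta Hth).
case: (boolP [forall s, g s == s]) => Hall.
  apply: Hne; apply: functional_extensionality => w.
  rewrite thE /Mir map_id_in // => s _; exact/eqP/(forallP Hall).
case/forallPn: Hall => a Ha.
set b := g a in Ha.
have gb : g b = a by apply: gI.
have [c Hc] : exists c, (c != a) && (c != b).
  case: (pickP (fun c => (c != a) && (c != b))) => [c Hc|Hnone]; first by exists c.
  have : size (enum S) <= size [:: a; b].
    apply: uniq_leq_size (enum_uniq _) _ => y _; rewrite !inE.
    by move: (Hnone y); case: (y == a); case: (y == b).
  by rewrite -cardE hS.
have [ca cb] : c != a /\ c != b by apply/andP.
have ab : a != b by rewrite eq_sym.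
have Hall3 : forall y, [|| y == a, y == b | y == c].
  move=> y; apply/negPn/negP => Hd.
  have [ya yb yc] : [/\ y != a, y != b & y != c].
    by move: Hd; case: (y == a); case: (y == b); case: (y == c).
  have : size [:: a; b; c; y] <= size (enum S).
    apply: uniq_leq_size => [|z _]; last by rewrite mem_enum.
    rewrite /= !inE (negbTE ab) (eq_sym a c) (negbTE ca) (eq_sym a y) (negbTE ya).
    by rewrite (eq_sym b c) (negbTE cb) (eq_sym b y) (negbTE yb) (eq_sym c y) (negbTE yc).
  by rewrite -cardE hS.
have gc : g c = c.
  case/or3P: (Hall3 (g c)) => /eqP E //.
  - by move: cb; rewrite -(gI c) E eqxx.
  - by move: ca; rewrite -(gI c) E gb eqxx.
have A1 : forall n, x n = x n.+1 -> False.
  move=> n E; apply: (Hfree n 2); rewrite /factor /mkseq /= addn0 addn1.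
  split => //; exists [:: x n], [:: x n.+1]; split => //; left; by rewrite E.
have A2 : forall n, x n = g (x n.+1) -> False.
  move=> n E; apply: (Hfree n 2); rewrite /factor /mkseq /= addn0 addn1.
  split => //; exists [:: x n], [:: x n.+1]; split => //; right.
  by rewrite thE /= E.
have A4 : forall n, x n = x n.+2 -> x n.+1 = x n.+3 -> False.
  move=> n E1 E2; apply: (Hfree n 4); rewrite /factor /mkseq /= !addnS !addn0.
  split => //; exists [:: x n; x n.+1], [:: x n.+2; x n.+3]; split => //; left.
  by rewrite E1 E2.
have A8 : forall n, x n = x n.+4 -> x n.+1 = x n.+4.+1 -> x n.+2 = x n.+4.+2 ->
    x n.+3 = x n.+4.+3 -> False.
  move=> n E1 E2 E3 E4; apply: (Hfree n 8); rewrite /factor /mkseq /= !addnS !addn0.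
  split => //; exists [:: x n; x n.+1; x n.+2; x n.+3],
     [:: x n.+4; x n.+4.+1; x n.+4.+2; x n.+4.+3]; split => //; left.
  by rewrite E1 E2 E3 E4.
have step1 : forall n, x n != c -> x n.+1 = c.
  move=> n Hn.
  case/or3P: (Hall3 (x n)) => /eqP En; rewrite ?En in Hn; last by rewrite eqxx in Hn.
  - case/or3P: (Hall3 (x n.+1)) => /eqP E1 //.
    + by case: (A1 n); rewrite En E1.
    + by case: (A2 n); rewrite En E1 gb.
  - case/or3P: (Hall3 (x n.+1)) => /eqP E1 //.
    + by case: (A2 n); rewrite En E1.
    + by case: (A1 n); rewrite En E1.
have step2 : forall n, x n = c -> x n.+1 != c.
  by move=> n En; apply/eqP => E1; apply: (A1 n); rewrite En E1.
have two : forall u v w, u != c -> v != c -> w != c -> u != v -> v != w -> u = w.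
  move=> u v w.
  case/or3P: (Hall3 u) => /eqP ->; case/or3P: (Hall3 v) => /eqP ->;
    case/or3P: (Hall3 w) => /eqP ->; rewrite ?eqxx //;
    by rewrite ?(negbTE ab) ?(eq_sym b a) ?(negbTE ab).
have [n Hn] : exists n, x n != c.
  case E: (x 0 == c); last by exists 0; rewrite E.
  by exists 1; apply: step2; apply/eqP.
have y1 := step1 _ Hn.
have y2 := step2 _ y1.
have y3 := step1 _ y2.
have y4 := step2 _ y3.
have y5 := step1 _ y4.
have y6 := step2 _ y5.
have y7 := step1 _ y6.
have d02 : x n != x n.+2 by apply/eqP => E; apply: (A4 n E); rewrite y1 y3.
have d24 : x n.+2 != x n.+4 by apply/eqP => E; apply: (A4 n.+2 E); rewrite y3 y5.
have d46 : x n.+4 != x n.+4.+2 by apply/eqP => E; apply: (A4 n.+4 E); rewrite y5 y7.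
apply: (A8 n).
- exact: two d02 d24.
- by rewrite y1 y5.
- exact: two d24 d46.
- by rewrite y3 y7.
Qed.

Theorem mainTheorem9 (S : finType) (hS : #|S| = 3) :
  (exists x : nat -> S, pseudo_square_free_inf (@Mir S) x) /\
  (forall theta : seq S -> seq S,
     antimorphic_involution theta -> theta <> @Mir S ->
     ~ exists x : nat -> S, pseudo_square_free_inf theta x).
Proof.
split; first exact: part1.
move=> theta; exact: part2.
Qed.
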